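(* Let $A\in\mathbb{R}^{N\times N}$, $B\in\mathbb{R}^{N\times m}$, $C\in\mathbb{R}^{p\times N}$, $D\in\mathbb{R}^{p\times m}$ with all eigenvalues of $A$ having negative real part. Let $\mathcal{W}:=L^2(-\infty,0;\mathbb{R}^m)$, $\mathcal{Y}:=L^2(0,\infty;\mathbb{R}^p)$ with standard inner products, and let $\mathcal{H}\colon\mathcal{W}\to\mathcal{Y}$, $(\mathcal{H}u)(t)=\int_{-\infty}^0 h(t-s)u(s)\,\mathrm{d}s$ with $h(t)=Ce^{tA}B+D\delta(t)$, have singular value decomposition $\mathcal{H}=\sum_{i=1}^N\sigma_i\langle\cdot,f_i\rangle_{\mathcal{W}}\,g_i$ with orthonormal $\{f_i\}\subset\mathcal{W}$, orthonormal $\{g_i\}\subset\mathcal{Y}$, $\sigma_1\ge\dots\ge\sigma_N\ge0$ (and $\sigma_{N+1}:=0$). Let $\mathbb{W}$ be the closed unit ball of $\mathcal{W}$. Then for $n=1,\dots,N$, the subspace $\widehat{\mathcal{W}}_n=\operatorname{span}\{f_1,\dots,f_n\}$ is an $n$-dimensional active subspace of $\mathcal{H}$ on $\mathbb{W}$, and the corresponding worst-case error is $$\sup_{w\in\mathbb{W}}\|\mathcal{H}(w)-\mathcal{H}(\pi_{\widehat{\mathcal{W}}_n}w)\|_{\mathcal{Y}}=\inf_{\mathcal{W}_n\le\mathcal{W},\,\dim\mathcal{W}_n\le n}\ \sup_{w\in\mathbb{W}}\|\mathcal{H}(w)-\mathcal{H}(\pi_{\mathcal{W}_n}w)\|_{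\mathcal{Y}}=\sigma_{n+1}.$$
   Context: An $n$-dimensional subspace $\widehat{\mathcal{W}}_n\le\mathcal{W}$ is called an active subspace of an operator $\mathcal{S}\colon\mathcal{W}\to\mathcal{Y}$ on a set $\mathbb{W}\subseteq\mathcal{W}$ if $\sup_{w\in\mathbb{W}}\|\mathcal{S}(w)-\mathcal{S}(\pi_{\widehat{\mathcal{W}}_n}w)\|=\inf_{\mathcal{W}_n\le\mathcal{W},\,\dim\mathcal{W}_n\le n}\sup_{w\in\mathbb{W}}\|\mathcal{S}(w)-\mathcal{S}(\pi_{\mathcal{W}_n}w)\|$, where $\pi_{\mathcal{W}_n}$ denotes the orthogonal projection onto $\mathcal{W}_n$. *)

(* Defs.v *)
From mathcomp Require Import all_boot all_order all_algebra.
From mathcomp Require Import all_classical all_reals all_analysis.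
From mathcomp Require Import complex.

Set Implicit Arguments.
Unset Strict Implicit.
Unset Printing Implicit Defensive.

Import Order.TTheory GRing.Theory Num.Theory.
Local Open Scope ring_scope.
Local Open Scope classical_set_scope.

Section Defs.
Variable R : realType.

Definition hurwitz (N : nat) (A : 'M[R]_N) : Prop :=
  forall z : R[i], eigenvalue (map_mx (real_complex R) A) z -> complex.Re z < 0.

Definition expm (N : nat) (A : 'M[R]_N) : 'M[R]_N :=
  limn (fun n : nat => \sum_(k < n) ((k`!)%:R^-1 *: A ^+ k)).

Definition Wdom : set R := `]-oo, 0]%classic.
Definition Ydom : set R := `[0, +oo[%classic.

Definition L2on (I : set R) (k : nat) (u : R -> 'cV[R]_k) : Prop :=
  (forall i : 'I_k, measurable_fun I (fun t => u t i 0)) /\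
  lebesgue_measure.-integrable I (fun t => (\sum_(i < k) (u t i 0) ^+ 2)%:E).

Definition ip (I : set R) (k : nat) (u v : R -> 'cV[R]_k) : R :=
  Rintegral lebesgue_measure I (fun t => \sum_(i < k) u t i 0 * v t i 0).

Definition l2norm (I : set R) (k : nat) (u : R -> 'cV[R]_k) : R :=
  Num.sqrt (ip I u u).

(** The Hankel operator (H u)(t) = int_{-oo}^0 C e^{(t-s)A} B u(s) ds, t >= 0.
    (The feedthrough term D delta(t-s) contributes only at t = s = 0, a
    Lebesgue-null set of t, hence vanishes as an element of Y.) *)
Definition hankel (N m p : nat) (A : 'M[R]_N) (B : 'M[R]_(N, m))
  (C : 'M[R]_(p, N)) (u : R -> 'cV[R]_m) : R -> 'cV[R]_p :=
  fun t => \col_(i < p)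
    Rintegral lebesgue_measure Wdom
      (fun s => (C *m expm ((t - s) *: A) *m B *m u s) i 0).

Definition spanfun (n k : nat) (v : 'I_n -> R -> 'cV[R]_k) (c : 'I_n -> R)
  : R -> 'cV[R]_k :=
  fun t => \sum_(i < n) c i *: v i t.

Definition is_orth_proj (I : set R) (n k : nat) (v : 'I_n -> R -> 'cV[R]_k)
  (w q : R -> 'cV[R]_k) : Prop :=
  (exists c : 'I_n -> R, q = spanfun v c) /\
  (forall i : 'I_n, ip I (w \- q) (v i) = 0).

(** Worst-case error sup_{w in unit ball of W} || H w - H (pi_{span v} w) ||_Y
    for the subspace span{v_i} of W (every subspace of dimension <= n is of
    this form). *)
Definition wc_err (N m p : nat) (A : 'M[R]_N) (B : 'M[R]_(N, m))
  (C : 'M[R]_(p, N)) (n : nat) (v : 'I_n -> R -> 'cV[R]_m) : \bar R :=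
  ereal_sup [set x : \bar R | exists w q : R -> 'cV[R]_m,
    [/\ L2on Wdom w, l2norm Wdom w <= 1, is_orth_proj Wdom v w q &
        x = (l2norm Ydom (hankel A B C w \- hankel A B C q))%:E]].

End Defs.
Arguments Wdom {R}.
Arguments Ydom {R}.

(* Main.v *)
Require Import Defs.
From mathcomp Require Import all_boot all_order all_algebra.
From mathcomp Require Import all_classical all_reals all_analysis.
From mathcomp Require Import complex.
From mathcomp Require Import ring lra.
From mathcomp Require Import measurable_realfun.
Import Order.TTheory GRing.Theory Num.Theory.
Local Open Scope ring_scope.
Local Open Scope classical_set_scope.

Section L2.
Context {R : realType}.
Notation mu := (@lebesgue_measure R).
Context {I : set R}.
Context (mI : measurable I).
Context {k : nat}.
Implicit Types u v w : R -> 'cV[R]_k.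

Definition sq u := fun t => \sum_(i < k) (u t i 0) ^+ 2.
Definition pr u v := fun t => \sum_(i < k) u t i 0 * v t i 0.

Lemma meas_pr u v : L2on I u -> L2on I v -> measurable_fun I (pr u v).
Proof.
move=> [mu1 _] [mv _]; apply: measurable_sum => i.
exact: measurable_realfun.measurable_funM.
Qed.

Lemma abs_pr_le (a b : R) : `|a * b| <= a ^+ 2 + b ^+ 2.
Proof.
rewrite ler_norml; apply/andP; split; nra.
Qed.

Lemma int_pr u v : L2on I u -> L2on I v ->
  mu.-integrable I (EFin \o pr u v).
Proof.
move=> hu hv; have [_ iu] := hu; have [_ iv] := hv.
apply: (@le_integrable _ _ _ mu I mI _ (fun t => (sq u t)%:E + (sq v t)%:E)).
- by apply/measurable_EFinP; exact: meas_pr.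
- move=> t It /=; rewrite lee_fin.
  rewrite (ger0_norm (x := _ + _)); last first.
    by apply: addr_ge0; apply: sumr_ge0 => i _; exact: sqr_ge0.
  rewrite /pr /sq -big_split /=; apply: le_trans (ler_norm_sum _ _ _) _.
  by apply: ler_sum => i _; exact: abs_pr_le.
- exact: integrableD.
Qed.

Lemma sq_ge0 u t : 0 <= sq u t.
Proof. by apply: sumr_ge0 => i _; exact: sqr_ge0. Qed.

Lemma meas_sq u : L2on I u -> measurable_fun I (sq u).
Proof.
move=> [mu1 _]; apply: measurable_sum => i; exact: measurable_realfun.measurable_funX.
Qed.

Lemma L2on0 : L2on I (fun=> (0 : 'cV[R]_k)).
Proof.
split=> [i|]; first by under eq_fun do rewrite mxE; exact: measurable_cst.
apply: (eq_integrable _ (cst 0%E)) => //; last exact: integrable0.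
by move=> t _ /=; rewrite big1 // => i _; rewrite mxE expr0n.
Qed.

Lemma L2onZ a u : L2on I u -> L2on I (fun t => a *: u t).
Proof.
move=> [mu1 iu]; split=> [i|].
  by under eq_fun do rewrite mxE; exact: measurable_realfun.measurable_funM.
apply: (@eq_integrable _ _ _ mu I mI (fun t => ((a ^+ 2)%:E * (sq u t)%:E)%E)).
  move=> t _ /=; rewrite -EFinM mulr_sumr; congr EFin.
  by apply: eq_bigr => i _; rewrite mxE exprMn.
exact: integrableZl.
Qed.

Lemma L2onD u v : L2on I u -> L2on I v -> L2on I (fun t => u t + v t).
Proof.
move=> hu hv; have [mu1 iu] := hu; have [mv iv] := hv; split=> [i|].
  by under eq_fun do rewrite mxE; exact: measurable_realfun.measurable_funD.
apply: (@le_integrable _ _ _ mu I mI _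
  (fun t => (2%:E * (sq u t)%:E + 2%:E * (sq v t)%:E)%E)).
- apply/measurable_EFinP; apply: measurable_sum => i.
  apply: measurable_realfun.measurable_funX.
  apply: (@eq_measurable_fun _ _ _ _ I (fun t => u t i 0 + v t i 0)).
    by move=> t _; rewrite mxE.
  exact: measurable_realfun.measurable_funD.
- move=> t It /=; rewrite lee_fin.
  rewrite ger0_norm; last by apply: sumr_ge0 => i _; exact: sqr_ge0.
  rewrite ger0_norm; last by apply: addr_ge0; apply: mulr_ge0 => //; exact: sq_ge0.
  rewrite /sq !mulr_sumr -big_split /=; apply: ler_sum => i _.
  rewrite mxE; move: (u t i 0) (v t i 0) => x y; have := sqr_ge0 (x - y); rewrite !expr2; nra.
- by apply: integrableD => //; exact: integrableZl.
Qed.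

Lemma L2onB u v : L2on I u -> L2on I v -> L2on I (u \- v).
Proof.
move=> hu hv; suff -> : (u \- v) = (fun t => u t + (-1) *: v t).
  exact: (L2onD _ _ hu (L2onZ (-1) v hv)).
by apply/funext => t; rewrite scaleN1r.
Qed.

Lemma L2on_ext u v : (forall t, u t = v t) -> L2on I u -> L2on I v.
Proof. by move=> e; rewrite (_ : u = v) //; exact/funext. Qed.

Lemma L2on_sum (J : Type) (s : seq J) (P : pred J) (F : J -> R -> 'cV[R]_k) :
  (forall j, P j -> L2on I (F j)) -> L2on I (fun t => \sum_(j <- s | P j) F j t).
Proof.
move=> hF; elim: s => [|j s ih].
  by apply: (L2on_ext _ _ _ L2on0) => t; rewrite big_nil.
case Pj: (P j).
  by apply: (L2on_ext _ _ _ (L2onD _ _ (hF _ Pj) ih)) => t; rewrite big_cons Pj.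
by apply: (L2on_ext _ _ _ ih) => t; rewrite big_cons Pj.
Qed.

Lemma eqR (f g : R -> R) : {in I, f =1 g} ->
  Rintegral mu I f = Rintegral mu I g.
Proof. move=> h; exact: (@eq_Rintegral _ _ _ mu I g f h). Qed.

Lemma ipE u v : ip I u v = Rintegral lebesgue_measure I (pr u v).
Proof. by []. Qed.

Lemma ipC u v : ip I u v = ip I v u.
Proof. by apply: eqR => t _; apply: eq_bigr => i _; rewrite mulrC. Qed.

Lemma ip0 w : ip I (fun=> (0 : 'cV[R]_k)) w = 0.
Proof.
rewrite ipE (@eqR _ (fun=> 0)); last first.
  by move=> t _; rewrite /pr big1 // => i _; rewrite mxE mul0r.
by rewrite /Rintegral integral0.
Qed.

Lemma ipD u v w : L2on I u -> L2on I v -> L2on I w ->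
  ip I (fun t => u t + v t) w = ip I u w + ip I v w.
Proof.
move=> hu hv hw; rewrite ipE (@eqR _ (fun t => pr u w t + pr v w t)).
  by rewrite RintegralD //; exact: int_pr.
by move=> t _; rewrite /pr -big_split /=; apply: eq_bigr => i _; rewrite mxE mulrDl.
Qed.

Lemma ipZ a u w : L2on I u -> L2on I w ->
  ip I (fun t => a *: u t) w = a * ip I u w.
Proof.
move=> hu hw; rewrite ipE (@eqR _ (fun t => a * pr u w t)).
  by rewrite RintegralZl //; exact: int_pr.
by move=> t _; rewrite /pr mulr_sumr; apply: eq_bigr => i _; rewrite mxE mulrA.
Qed.

Lemma ipB u v w : L2on I u -> L2on I v -> L2on I w ->
  ip I (u \- v) w = ip I u w - ip I v w.
Proof.
move=> hu hv hw.
have -> : (u \- v) = (fun t => u t + (-1) *: v t).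
  by apply/funext => t; rewrite scaleN1r.
rewrite ipD //; last exact: L2onZ.
by rewrite ipZ // mulN1r.
Qed.

Lemma ip_sum (J : Type) (s : seq J) (P : pred J) (c : J -> R)
  (F : J -> R -> 'cV[R]_k) w :
  (forall j, P j -> L2on I (F j)) -> L2on I w ->
  ip I (fun t => \sum_(j <- s | P j) c j *: F j t) w
  = \sum_(j <- s | P j) c j * ip I (F j) w.
Proof.
move=> hF hw; elim: s => [|j s ih].
  rewrite big_nil -(ip0 w); congr ip; apply/funext => t; by rewrite big_nil.
rewrite big_cons; case Pj: (P j).
  have -> : (fun t => \sum_(j0 <- j :: s | P j0) c j0 *: F j0 t)
     = (fun t => c j *: F j t + \sum_(j0 <- s | P j0) c j0 *: F j0 t).
    by apply/funext => t; rewrite big_cons Pj.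
  rewrite ipD //; first by rewrite ipZ // ?ih //; exact: hF.
  - by apply: L2onZ; exact: hF.
  - by apply: L2on_sum => j0 Pj0; apply: L2onZ; exact: hF.
rewrite -ih; congr ip; apply/funext => t; by rewrite big_cons Pj.
Qed.

Lemma ip_ge0 u : 0 <= ip I u u.
Proof.
by apply: Rintegral_ge0 => t _; apply: sumr_ge0 => i _; rewrite -expr2 sqr_ge0.
Qed.

Lemma ip_ortho_comb K (phi : 'I_K -> R -> 'cV[R]_k) (x : 'I_K -> R) j :
  (forall i, L2on I (phi i)) -> (forall i j, ip I (phi i) (phi j) = (i == j)%:R) ->
  ip I (fun t => \sum_(i < K) x i *: phi i t) (phi j) = x j.
Proof.
move=> hphi ho; rewrite ip_sum //; rewrite (bigD1 j) //= ho eqxx mulr1 big1 ?addr0 //.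
by move=> i /negPf ij; rewrite ho ij mulr0.
Qed.

Lemma ip_ortho_comb2 K (phi : 'I_K -> R -> 'cV[R]_k) (x y : 'I_K -> R) :
  (forall i, L2on I (phi i)) -> (forall i j, ip I (phi i) (phi j) = (i == j)%:R) ->
  ip I (fun t => \sum_(i < K) x i *: phi i t) (fun t => \sum_(i < K) y i *: phi i t)
  = \sum_(i < K) x i * y i.
Proof.
move=> hphi ho; rewrite ip_sum //; last by apply: L2on_sum => i _; exact: L2onZ.
by apply: eq_bigr => i _; rewrite ipC ip_ortho_comb.
Qed.

Lemma ip_pr_ge0 u t : 0 <= pr u u t.
Proof. by apply: sumr_ge0 => i _; rewrite -expr2 sqr_ge0. Qed.

End L2.
Section NM.
Local Open Scope ereal_scope.
Context d (T : measurableType d) (R : realType) (mu : {measure set T -> \bar R}).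
Import HBNNSimple.

Lemma memS {A : set T} {x} : (x \in A) = true -> A x.
Proof. by move=> h; rewrite -in_setE h. Qed.

Lemma nm_le (D : set T) (f1 f2 : T -> \bar R) :
  (forall x, D x -> 0 <= f1 x) -> (forall x, D x -> f1 x <= f2 x) ->
  \int[mu]_(x in D) f1 x <= \int[mu]_(x in D) f2 x.
Proof.
move=> f10 f12.
have f20 : forall x, D x -> 0 <= f2 x.
  by move=> x Dx; exact: le_trans (f10 x Dx) (f12 x Dx).
rewrite (ge0_integralE _ f10) (ge0_integralE _ f20).
apply: ereal_sup_le => _ [h hf1 <-]; exists h => // x.
apply: le_trans (hf1 x) _; rewrite /patch; case: ifP => // /memS Dx.
exact: f12.
Qed.

Lemma nm_ae (D N : set T) (F G : T -> \bar R) :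
  measurable D -> measurable N -> mu N = 0 -> measurable_fun D G ->
  (forall x, D x -> 0 <= F x) -> (forall x, D x -> 0 <= G x) ->
  (forall x, D x -> ~ N x -> F x = G x) ->
  \int[mu]_(x in D) F x = \int[mu]_(x in D) G x.
Proof.
move=> mD mN N0 mG F0 G0 FG; apply/eqP; rewrite eq_le; apply/andP; split.
  rewrite ge0_integralE //; apply: ge_ereal_sup => _ [h hF <-].
  have mh : measurable_fun setT (fun x => (h x)%:E).
    by apply/measurable_EFinP; exact: measurable_funPT.
  have h0 : forall x, setT x -> 0 <= (h x)%:E by move=> x _; rewrite lee_fin.
  rewrite -integralT_nnsfun (ge0_negligible_integral mN measurableT mh h0 N0).
  rewrite setTD -(setTI (~` N)) integral_mkcondr [in leRHS]integral_mkcond.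
  apply: ge0_le_integral => //.
  - by move=> x _; rewrite /patch; case: ifP => // _; rewrite lee_fin.
  - apply/(measurable_restrictT _ _).1 => //; first exact: measurableC.
    exact: (measurable_funS measurableT (@subsetT _ _) mh).
  - exact/(measurable_restrictT _ _).1.
  move=> x _; rewrite /patch; case: ifP => [H|_].
    have Nx := memS H; case: ifP => [H'|H'].
      have Dx := memS H'.
      have := hF x; rewrite /patch H'.
      by rewrite (FG x Dx Nx).
    by have := hF x; rewrite /patch H'.
  by case: ifP => // H; exact: G0 (memS H).
rewrite (ge0_negligible_integral mN) //.
rewrite (eq_integral F); last first.
  by move=> x H; have [Dx Nx] := memS H; rewrite FG.
rewrite integral_mkcondr; apply: nm_le.
- by move=> x Dx; rewrite /patch; case: ifP => // _; exact: F0.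
- move=> x Dx; rewrite /patch; case: ifP => // _; exact: F0.
Qed.

End NM.
Arguments nm_ae {d T R mu D N F G}.
Arguments nm_le {d T R mu D f1 f2}.

Section Main.
Variables (R : realType) (N m p : nat) (A : 'M[R]_N) (B : 'M[R]_(N, m))
  (C : 'M[R]_(p, N)) (sigma : nat -> R) (f : nat -> R -> 'cV[R]_m)
  (g : nat -> R -> 'cV[R]_p).
Hypothesis hf : forall i, (i < N)%N -> L2on Wdom (f i).
Hypothesis hg : forall i, (i < N)%N -> L2on Ydom (g i).
Hypothesis hfo : forall i j, (i < N)%N -> (j < N)%N -> ip Wdom (f i) (f j) = (i == j)%:R.
Hypothesis hgo : forall i j, (i < N)%N -> (j < N)%N -> ip Ydom (g i) (g j) = (i == j)%:R.
Hypothesis hsm : forall i j, (i <= j)%N -> (j < N)%N -> sigma j <= sigma i.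
Hypothesis hs0 : forall i, (i < N)%N -> 0 <= sigma i.
Hypothesis hH : forall u, L2on Wdom u ->
     hankel A B C u
     = (fun t => \sum_(i < N) (sigma i * ip Wdom u (f i)) *: g i t)
       %[ae lebesgue_measure in Ydom].

Notation H := (hankel A B C).

Lemma mW : measurable (Wdom : set R).
Proof. by rewrite /Wdom /Ydom; exact: measurable_itv. Qed.
Lemma mY : measurable (Ydom : set R).
Proof. by rewrite /Wdom /Ydom; exact: measurable_itv. Qed.

Lemma keyK w q : L2on Wdom w -> L2on Wdom q ->
  ip Ydom (H w \- H q) (H w \- H q)
  = \sum_(i < N) (sigma i * (ip Wdom w (f i) - ip Wdom q (f i))) ^+ 2.
Proof.
move=> hw hq.
pose x := fun i : 'I_N => sigma i * (ip Wdom w (f i) - ip Wdom q (f i)).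
pose G := fun t => \sum_(i < N) x i *: g i t.
have hgo' : forall i j : 'I_N, ip Ydom (g i) (g j) = (i == j)%:R.
  by move=> i j; rewrite hgo.
have hg' : forall i : 'I_N, L2on Ydom (g i) by move=> i; exact: hg.
have LG : L2on Ydom G by apply: (L2on_sum mY) => i _; exact: (L2onZ mY).
have ae : \forall t \ae lebesgue_measure, Ydom t -> (H w \- H q) t = G t.
  move: (hH w hw) (hH q hq); apply: (filterS2 (ae_filter_ringOfSetsType lebesgue_measure)).
  move=> t h1 h2 Yt.
  rewrite /= (h1 Yt) (h2 Yt) /G -sumrB; apply: eq_bigr => i _.
  by rewrite -scalerBl -mulrBr.
have -> : ip Ydom (H w \- H q) (H w \- H q) = ip Ydom G G.
  case: ae => Nn [mNn Nn0 sub].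
  rewrite /ip /Rintegral; congr fine.
  apply: (nm_ae _ mNn Nn0); first exact: mY.
  - by apply/measurable_EFinP; exact: meas_pr.
  - by move=> t _; rewrite lee_fin; exact: ip_pr_ge0.
  - by move=> t _; rewrite lee_fin; exact: ip_pr_ge0.
  move=> t Yt Nt; have e : (H w \- H q) t = G t.
    apply: contrapT => ne; apply: Nt; apply: sub => /= h; apply: ne; exact: h.
  by rewrite e.
rewrite (ip_ortho_comb2 mY) //; apply: eq_bigr => i _; by rewrite expr2.
Qed.

Lemma sq_mono (x y a : R) : 0 <= x -> x <= y -> (x * a) ^+ 2 <= (y * a) ^+ 2.
Proof.
move=> x0 xy; rewrite !exprMn; apply: ler_wpM2r; first exact: sqr_ge0.
rewrite !expr2; nra.
Qed.

Lemma hfo_ord {n} (hn : (n <= N)%N) :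
  forall i j : 'I_n, ip Wdom (f i) (f j) = (i == j)%:R.
Proof.
move=> i j; rewrite hfo //; exact: leq_trans (ltn_ord _) hn.
Qed.

Lemma hf_ord {n} (hn : (n <= N)%N) : forall i : 'I_n, L2on Wdom (f i).
Proof. by move=> i; apply: hf; exact: leq_trans (ltn_ord _) hn. Qed.

Lemma ipf_in {n} (hn : (n <= N)%N) (c : 'I_n -> R) (j : 'I_n) :
  ip Wdom (spanfun (fun i : 'I_n => f i) c) (f j) = c j.
Proof. rewrite /spanfun; exact: (ip_ortho_comb mW n (fun i : 'I_n => f i) c j (hf_ord hn) (hfo_ord hn)). Qed.

Lemma ipf_out {n} (hn : (n <= N)%N) (c : 'I_n -> R) (k : nat) :
  (n <= k)%N -> (k < N)%N ->
  ip Wdom (spanfun (fun i : 'I_n => f i) c) (f k) = 0.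
Proof.
move=> nk kN; rewrite /spanfun (ip_sum mW); [|by move=> i _; exact: hf_ord hn i|exact: hf].
apply: big1 => i _; rewrite hfo //; last exact: leq_trans (ltn_ord _) hn.
case: eqP => [ik|]; last by rewrite mulr0.
by have := ltn_ord i; rewrite ik ltnNge nk.
Qed.

Lemma L2span {n} (hn : (n <= N)%N) (c : 'I_n -> R) :
  L2on Wdom (spanfun (fun i : 'I_n => f i) c).
Proof. by apply: (L2on_sum mW) => i _; apply: (L2onZ mW); exact: hf_ord. Qed.

Lemma bessel w : L2on Wdom w ->
  \sum_(i < N) (ip Wdom w (f i)) ^+ 2 <= ip Wdom w w.
Proof.
move=> hw; pose a := fun i : 'I_N => ip Wdom w (f i).
pose P := fun t => \sum_(i < N) a i *: f i t.
have hfN := hf_ord (leqnn N); have hfoN := hfo_ord (leqnn N).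
have LP : L2on Wdom P by apply: (L2on_sum mW) => i _; exact: (L2onZ mW).
have LwP : L2on Wdom (w \- P) by exact: (L2onB mW).
have := ip_ge0 (w \- P) (I := Wdom).
rewrite (ipB mW) // ipC (ipB mW) // [ip _ P (w \- P)]ipC (ipB mW) //.
have ePw : ip Wdom P w = \sum_(i < N) a i ^+ 2.
  rewrite (ip_sum mW) //; apply: eq_bigr => i _; by rewrite ipC expr2.
have ePP : ip Wdom P P = \sum_(i < N) a i ^+ 2.
  rewrite (ip_ortho_comb2 mW) //; apply: eq_bigr => i _; by rewrite expr2.
rewrite [ip _ w P]ipC ePw ePP; lra.
Qed.

Definition s n := if (n < N)%N then sigma n else 0.

Lemma s_ge0 n : 0 <= s n.
Proof. by rewrite /s; case: ifP => // nN; exact: hs0. Qed.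

Lemma upper n (hn : (n <= N)%N) w q : L2on Wdom w -> l2norm Wdom w <= 1 ->
  is_orth_proj Wdom (fun i : 'I_n => f i) w q ->
  l2norm Ydom (H w \- H q) <= s n.
Proof.
move=> hw w1 [[c ->] ho].
have Lq := L2span hn c.
rewrite /l2norm keyK //.
have ww1 : ip Wdom w w <= 1.
  by move: w1; rewrite /l2norm -{1}sqrtr1 ler_sqrt.
have hb := bessel w hw.
apply: (@le_trans _ _ (Num.sqrt ((s n) ^+ 2))); last first.
  by rewrite sqrtr_sqr ger0_norm //; exact: s_ge0.
rewrite ler_sqrt; last exact: sqr_ge0.
apply: (@le_trans _ _ (\sum_(i < N) (s n * ip Wdom w (f i)) ^+ 2)).
  apply: ler_sum => i _.
  case: (ltnP i n) => [iN|ni].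
    have := ho (Ordinal iN); rewrite /= (ipB mW _ _ _ hw Lq (hf _ (ltn_ord i))).
    by move=> /= ->; rewrite mulr0 expr0n /=; exact: sqr_ge0.
  rewrite (ipf_out hn c _ ni (ltn_ord i)) subr0.
  have nN : (n < N)%N by exact: leq_ltn_trans ni (ltn_ord i).
  rewrite /s nN; apply: sq_mono; first exact: hs0.
  exact: hsm.
under eq_bigr do rewrite exprMn.
rewrite -mulr_sumr -[leRHS]mulr1; apply: ler_wpM2l; first exact: sqr_ge0.
exact: le_trans hb ww1.
Qed.

Lemma kernel_vec n (M : 'M[R]_(n.+1, n)) :
  exists e : 'I_n.+1 -> R,
    \sum_j e j ^+ 2 = 1 /\ forall i, \sum_j e j * M j i = 0.
Proof.
have rk : (0 < \rank (kermx M))%N.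
  by rewrite mxrank_ker subn_gt0 ltnS rank_leq_col.
have kne : kermx M != 0 by rewrite -mxrank_eq0 -lt0n.
have [i ri] : exists i, row i (kermx M) != 0.
  case/boolP: [exists i, row i (kermx M) != 0] => [/existsP//|/existsPn allz].
  move/negP: kne; case; apply/eqP/row_matrixP => i; rewrite row0; apply/eqP.
  by move: (allz i); rewrite negbK.
set d := row i (kermx M).
have dM : d *m M = 0 by apply/sub_kermxP; exact: row_sub.
have [j dj] : exists j, d 0 j != 0.
  case/boolP: [exists j, d 0 j != 0] => [/existsP//|/existsPn allz].
  move/negP: ri; case; apply/eqP/rowP => j; rewrite [RHS]mxE; apply/eqP.
  by move: (allz j); rewrite negbK.
pose r := \sum_j d 0 j ^+ 2.
have r0 : 0 < r.
  rewrite /r (bigD1 j) //=.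
  have h1 : 0 < d 0 j ^+ 2 by rewrite lt_neqAle eq_sym sqrf_eq0 dj sqr_ge0.
  have h2 : 0 <= \sum_(k < n.+1 | k != j) d 0 k ^+ 2.
    by apply: sumr_ge0 => k _; exact: sqr_ge0.
  lra.
exists (fun j => d 0 j / Num.sqrt r); split.
  under eq_bigr do rewrite expr_div_n.
  rewrite -mulr_suml sqr_sqrtr ?ltW // divff //; exact: lt0r_neq0.
move=> i0; have := congr1 (fun X : 'rV_n => X 0 i0) dM; rewrite !mxE => h.
under eq_bigr do rewrite mulrAC.
by rewrite -mulr_suml h mul0r.
Qed.

Lemma lower n (hn : (n <= N)%N) (v : 'I_n -> R -> 'cV[R]_m) :
  (forall i, L2on Wdom (v i)) -> ((s n)%:E <= wc_err A B C v)%E.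
Proof.
move=> hv.
pose q0 := spanfun v (fun=> 0).
have Lq : L2on Wdom q0 by apply: (L2on_sum mW) => i _; exact: (L2onZ mW).
have ipq : forall u, L2on Wdom u -> ip Wdom q0 u = 0.
  move=> u hu; rewrite /q0 /spanfun (ip_sum mW _ _ _ _ _ _ (fun i _ => hv i) hu).
  by rewrite big1 // => i _; rewrite mul0r.
have key : forall w, L2on Wdom w -> l2norm Wdom w <= 1 ->
    (forall i, ip Wdom w (v i) = 0) ->
    ((l2norm Ydom (H w \- H q0))%:E <= wc_err A B C v)%E.
  move=> w hw w1 wo; apply: ereal_sup_ubound; exists w, q0; split => //.
  split; first by exists (fun=> 0).
  by move=> i; rewrite (ipB mW) // wo ipq // subr0.
case: (ltnP n N) => [nN|Nn]; last first.
  rewrite /s ltnNge Nn /=.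
  have L0 := L2on0 mW (k := m).
  apply: le_trans (key _ L0 _ _); first by rewrite lee_fin; exact: sqrtr_ge0.
    by rewrite /l2norm ip0 sqrtr0.
  by move=> i; rewrite ip0.
pose M := \matrix_(j < n.+1, i < n) ip Wdom (f j) (v i).
have [e [e1 eM]] := kernel_vec _ M.
have hn1 : (n.+1 <= N)%N by [].
pose w := spanfun (fun j : 'I_n.+1 => f j) e.
have Lw : L2on Wdom w := L2span hn1 e.
have ww : ip Wdom w w = 1.
  rewrite /w /spanfun (ip_ortho_comb2 mW _ _ _ _ (hf_ord hn1) (hfo_ord hn1)).
  by rewrite -e1; apply: eq_bigr => j _; rewrite expr2.
apply: le_trans (key w Lw _ _); last first.
- move=> i; rewrite /w /spanfun (ip_sum mW _ _ _ _ _ _ (fun j _ => hf_ord hn1 j) (hv i)).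
  apply: eq_trans (eM i); apply: eq_bigr => j _; by rewrite mxE.
- by rewrite /l2norm ww sqrtr1.
rewrite lee_fin /l2norm keyK // /s nN.
have -> : \sum_(i < N) (sigma i * (ip Wdom w (f i) - ip Wdom q0 (f i))) ^+ 2
    = \sum_(i < N) (sigma i * ip Wdom w (f i)) ^+ 2.
  by apply: eq_bigr => i _; rewrite ipq ?subr0 //; exact: hf.
rewrite -(ger0_norm (hs0 _ nN)) -sqrtr_sqr ler_sqrt; last first.
  by apply: sumr_ge0 => i _; exact: sqr_ge0.
apply: (@le_trans _ _ (\sum_(i < n.+1) (sigma i * ip Wdom w (f i)) ^+ 2)).
  rewrite -[X in X <= _]mulr1 -e1 mulr_sumr; apply: ler_sum => j _.
  rewrite /w (ipf_in hn1) -exprMn; apply: sq_mono; first exact: hs0.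
  by apply: hsm; [rewrite -ltnS; exact: ltn_ord|exact: nN].
rewrite (big_ord_widen _ (fun k => (sigma k * ip Wdom w (f k)) ^+ 2) hn1).
rewrite big_mkcond /=; apply: ler_sum => i _; case: ifP => // _; exact: sqr_ge0.
Qed.

Lemma main_sec n : (1 <= n <= N)%N ->
    [/\ (forall c : 'I_n -> R,
           spanfun (fun i : 'I_n => f i) c = (fun=> 0) %[ae lebesgue_measure in Wdom] ->
           forall i, c i = 0),
        wc_err A B C (fun i : 'I_n => f i)
        = ereal_inf [set wc_err A B C v | v in
                       [set v : 'I_n -> R -> 'cV[R]_m | forall i, L2on Wdom (v i)]]
      & wc_err A B C (fun i : 'I_n => f i)
        = (if (n < N)%N then sigma n else 0)%:E].
Proof.
case/andP => _ hn.
have eq3 : wc_err A B C (fun i : 'I_n => f i) = (s n)%:E.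
  apply/eqP; rewrite eq_le; apply/andP; split.
    apply: ge_ereal_sup => _ [w [q [hw w1 hq ->]]]; rewrite lee_fin.
    exact: upper.
  exact: lower (hf_ord hn).
split.
- move=> c hc i; rewrite -(ipf_in hn c i) /ip /Rintegral.
  rewrite (ae_eq_integral (cst 0%E)) ?integral0 //.
  + exact: mW.
  + apply/measurable_EFinP; apply: meas_pr; first exact: L2span.
    exact: hf_ord.
  + case: hc => Nn [mNn Nn0 sub]; exists Nn; split => // t /= nt.
    apply: sub => /= h; apply: nt => Wt.
    by rewrite /= (h Wt) big1 // => k _; rewrite mxE mul0r.
- apply/eqP; rewrite eq_le; apply/andP; split.
    rewrite eq3; apply: le_ereal_inf_tmp => _ [v hv <-]; exact: lower hn v hv.
  apply: ereal_inf_lbound; exists (fun i : 'I_n => f i) => //; exact: hf_ord.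
- by rewrite eq3.
Qed.

End Main.

Theorem theorem4p1 (R : realType) (N m p : nat)
  (A : 'M[R]_N) (B : 'M[R]_(N, m)) (C : 'M[R]_(p, N)) (D : 'M[R]_(p, m))
  (sigma : nat -> R) (f : nat -> R -> 'cV[R]_m) (g : nat -> R -> 'cV[R]_p) :
  hurwitz A ->
  (forall i, (i < N)%N -> L2on Wdom (f i)) ->
  (forall i, (i < N)%N -> L2on Ydom (g i)) ->
  (forall i j, (i < N)%N -> (j < N)%N -> ip Wdom (f i) (f j) = (i == j)%:R) ->
  (forall i j, (i < N)%N -> (j < N)%N -> ip Ydom (g i) (g j) = (i == j)%:R) ->
  (forall i j, (i <= j)%N -> (j < N)%N -> sigma j <= sigma i) ->
  (forall i, (i < N)%N -> 0 <= sigma i) ->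
  (forall u, L2on Wdom u ->
     hankel A B C u
     = (fun t => \sum_(i < N) (sigma i * ip Wdom u (f i)) *: g i t)
       %[ae lebesgue_measure in Ydom]) ->
  forall n : nat, (1 <= n <= N)%N ->
    [/\ (forall c : 'I_n -> R,
           spanfun (fun i : 'I_n => f i) c = (fun=> 0) %[ae lebesgue_measure in Wdom] ->
           forall i, c i = 0),
        wc_err A B C (fun i : 'I_n => f i)
        = ereal_inf [set wc_err A B C v | v in
                       [set v : 'I_n -> R -> 'cV[R]_m | forall i, L2on Wdom (v i)]]
      & wc_err A B C (fun i : 'I_n => f i)
        = (if (n < N)%N then sigma n else 0)%:E].
Proof.
move=> _ hf hg hfo hgo hsm hs0 hH n hn.
exact: (@main_sec R N m p A B C sigma f g hf hg hfo hgo hsm hs0 hH n hn).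
Qed.
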